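(* Let $\bm v_1,\dots,\bm v_N\in\mathbb{R}^r$, $\bm X := \mathsf{Gram}(\bm v_1,\dots,\bm v_N)$, and $\bm v := (\bm v_1;\dots;\bm v_N)\in\mathbb{R}^{rN}$. (a) If $\sum_{i=1}^N\|\bm v_i\|_2^2 = N$ and there exists $\bm M\in\mathcal{B}(N,r)$ with $\mathrm{rank}(\bm M) = r$ and $\bm v^\top\bm M\bm v = N^2$, then $\bm X\in\mathscr{C}^N$. (b) If $N\notin\{1,2\}$ and $N$ is not divisible by $4$, then $\bm I_N\in\mathscr{C}^N$ and $\bm I_N = \mathsf{Gram}(\bm e_1,\dots,\bm e_N)$ (standard basis of $\mathbb{R}^N$), but with $\bm v := (\bm e_1;\dots;\bm e_N)\in\mathbb{R}^{N^2}$ there is no $\bm M\in\mathcal{B}(N,N)$ with $\bm v^\top\bm M\bm v = N^2$ and $\mathrm{rank}(\bm M) = N$.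
   Context: $\mathscr{C}^N := \mathrm{conv}\{\bm x\bm x^\top : \bm x\in\{\pm1\}^N\}$ (the cut polytope). $\mathsf{Gram}$ denotes the Gram matrix, $(\bm v_1;\dots;\bm v_N)$ the concatenation. A matrix $\bm M \in \mathbb{R}^{rN\times rN}$ is viewed as an $N\times N$ array of $r\times r$ blocks, $\bm M_{[ij]}$ denoting block $(i,j)$. $\mathcal{B}(N,r)$ is the set of symmetric $\bm M \in \mathbb{R}^{rN\times rN}$ with $\bm M \succeq 0$, $\bm M_{[ii]} = \bm I_r$ for all $i$, and $\bm M_{[ij]} = \bm M_{[ij]}^\top$ for all $i,j$. *)

(* Defs.v *)
(* Real numbers are modelled by an arbitrary real closed field. *)
From HB Require Import structures.
From mathcomp Require Import all_boot all_order all_algebra.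
Set Implicit Arguments. Unset Strict Implicit. Unset Printing Implicit Defensive.
Import Order.TTheory GRing.Theory Num.Theory.
Local Open Scope ring_scope.

Section Defs.
Variable R : rcfType.

Definition psd n (M : 'M[R]_n) : Prop :=
  M^T = M /\ forall u : 'cV[R]_n, 0 <= (u^T *m M *m u) 0 0.

(* a (N*r)x(N*r) matrix viewed as an N x N array of r x r blocks;
   block (i,j) entry (a,b) sits at row i*r+a, column j*r+b *)
Definition blk N r (M : 'M[R]_(N * r)) (i j : 'I_N) : 'M[R]_r :=
  \matrix_(a < r, b < r) M (mxvec_index i a) (mxvec_index j b).

Definition calB N r (M : 'M[R]_(N * r)) : Prop :=
  psd M /\ (forall i, blk M i i = 1%:M) /\ (forall i j, (blk M i j)^T = blk M i j).

Definition gram N r (v : 'I_N -> 'cV[R]_r) : 'M[R]_N :=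
  \matrix_(i, j) ((v i)^T *m v j) 0 0.

Definition vcat N r (v : 'I_N -> 'cV[R]_r) : 'cV[R]_(N * r) :=
  (mxvec (\matrix_(i < N, a < r) v i a 0))^T.

Definition signv N (s : {ffun 'I_N -> bool}) : 'cV[R]_N :=
  \col_i (if s i then -1 else 1).

Definition cut_polytope N (X : 'M[R]_N) : Prop :=
  exists lam : {ffun 'I_N -> bool} -> R,
    (forall s, 0 <= lam s) /\ \sum_s lam s = 1 /\
    X = \sum_s lam s *: (signv s *m (signv s)^T).

Definition ebasis N (i : 'I_N) : 'cV[R]_N := delta_mx i 0.
End Defs.

(* Main.v *)
Require Import Defs.
From HB Require Import structures.
From mathcomp Require Import all_boot all_order all_algebra ring lra.
Set Implicit Arguments. Unset Strict Implicit. Unset Printing Implicit Defensive.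
Import Order.TTheory GRing.Theory Num.Theory.
Local Open Scope ring_scope.

Section P9.
Variable R : rcfType.

Definition dot r (x y : 'cV[R]_r) : R := (x^T *m y) 0 0.

Lemma dotE r (x y : 'cV[R]_r) : dot x y = \sum_a x a 0 * y a 0.
Proof. by rewrite /dot mxE; apply: eq_bigr => a _; rewrite mxE. Qed.

Lemma dotC r (x y : 'cV[R]_r) : dot x y = dot y x.
Proof. by rewrite !dotE; apply: eq_bigr => a _; rewrite mulrC. Qed.

Lemma dot_sumr r I (s : seq I) (P : pred I) (x : 'cV[R]_r) (F : I -> 'cV[R]_r) :
  dot x (\sum_(i <- s | P i) F i) = \sum_(i <- s | P i) dot x (F i).
Proof. by rewrite /dot mulmx_sumr summxE. Qed.

Lemma dot_suml r I (s : seq I) (P : pred I) (x : 'cV[R]_r) (F : I -> 'cV[R]_r) :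
  dot (\sum_(i <- s | P i) F i) x = \sum_(i <- s | P i) dot (F i) x.
Proof. rewrite dotC dot_sumr; apply: eq_bigr => i _; exact: dotC. Qed.

Lemma dotZr r c (x y : 'cV[R]_r) : dot x (c *: y) = c * dot x y.
Proof. by rewrite /dot -scalemxAr mxE. Qed.

Lemma dotZl r c (x y : 'cV[R]_r) : dot (c *: x) y = c * dot x y.
Proof. by rewrite dotC dotZr dotC. Qed.

Lemma dotDr r (x y z : 'cV[R]_r) : dot x (y + z) = dot x y + dot x z.
Proof. by rewrite /dot mulmxDr mxE. Qed.

Lemma dotDl r (x y z : 'cV[R]_r) : dot (y + z) x = dot y x + dot z x.
Proof. by rewrite dotC dotDr !(dotC x). Qed.

Lemma dotNr r (x y : 'cV[R]_r) : dot x (- y) = - dot x y.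
Proof. by rewrite -scaleN1r dotZr mulN1r. Qed.

Lemma dotNl r (x y : 'cV[R]_r) : dot (- y) x = - dot y x.
Proof. by rewrite dotC dotNr dotC. Qed.

Lemma dotMl r (A : 'M[R]_r) (x y : 'cV[R]_r) : dot (A *m x) y = dot x (A^T *m y).
Proof. by rewrite /dot trmx_mul mulmxA. Qed.

Lemma dot_ge0 r (x : 'cV[R]_r) : 0 <= dot x x.
Proof. by rewrite dotE; apply: sumr_ge0 => a _; rewrite -expr2 sqr_ge0. Qed.

Lemma dot_eq0 r (x : 'cV[R]_r) : dot x x = 0 -> x = 0.
Proof.
rewrite dotE => /psumr_eq0P H.
have {}H := H (fun i _ => sqr_ge0 (x i 0)).
apply/matrixP => a b; rewrite (ord1 b) [RHS]mxE.
by have /eqP := H a isT; rewrite mulf_eq0 orbb => /eqP.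
Qed.

Lemma sum_mxvec m n (F : 'I_(m * n) -> R) :
  \sum_k F k = \sum_i \sum_j F (mxvec_index i j).
Proof.
rewrite pair_big (reindex (uncurry (@mxvec_index m n))) /=.
  by apply: eq_bigr => -[i j].

have [f H1 H2] := @curry_mxvec_bij m n. exists f => x _; [exact: H1 | exact: H2].
Qed.


Definition sg (b : bool) : R := if b then -1 else 1.

Definition flip n (k : 'I_n) (s : {ffun 'I_n -> bool}) : {ffun 'I_n -> bool} :=
  [ffun i => if i == k then ~~ s i else s i].

Lemma flipK n (k : 'I_n) : involutive (flip k).
Proof. by move=> s; apply/ffunP => i; rewrite !ffunE; case: eqP => // ->; rewrite negbK. Qed.

Lemma flip_eq n (k : 'I_n) s i : i != k -> flip k s i = s i.
Proof. by rewrite ffunE => /negbTE ->. Qed.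

Lemma flip_k n (k : 'I_n) s : flip k s k = ~~ s k.
Proof. by rewrite ffunE eqxx. Qed.

Lemma comm_stepP r (Q A : 'M[R]_r) (u : 'cV[R]_r) c a :
  Q *m A = A *m Q -> Q *m u = c *: u ->
  Q *m (a *: (u + A *m u)) = c *: (a *: (u + A *m u)).
Proof.
move=> HA Qu; rewrite -!scalemxAr mulmxDr mulmxA HA -mulmxA Qu -scalemxAr.
by rewrite -scalerDr !scalerA mulrC.
Qed.

Lemma comm_stepM r (Q A : 'M[R]_r) (u : 'cV[R]_r) c a :
  Q *m A = A *m Q -> Q *m u = c *: u ->
  Q *m (a *: (u - A *m u)) = c *: (a *: (u - A *m u)).
Proof.
move=> HA Qu; rewrite -!scalemxAr mulmxBr mulmxA HA -mulmxA Qu -scalemxAr.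
by rewrite -scalerBr !scalerA mulrC.
Qed.

Lemma eigdec_k n r (P : 'I_n -> 'M[R]_r) :
  (forall i, P i *m P i = 1%:M) -> (forall i j, P i *m P j = P j *m P i) ->
  forall k, (k <= n)%N -> forall u : 'cV[R]_r,
  exists g : {ffun 'I_n -> bool} -> 'cV[R]_r,
    [/\ u = \sum_s g s,
        forall (i : 'I_n) s, (i < k)%N -> P i *m g s = sg (s i) *: g s,
        forall (s : {ffun 'I_n -> bool}) (i : 'I_n), (k <= i)%N -> s i -> g s = 0 &
        forall (Q : 'M[R]_r) c, (forall i, Q *m P i = P i *m Q) -> Q *m u = c *: u ->
           forall s, Q *m g s = c *: g s].
Proof.
move=> HP2 HPc; elim=> [_ u|k IH lekn u].
  exists (fun s => if s == [ffun => false] then u else 0); split.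
  - by rewrite -big_mkcond /= big_pred1_eq.
  - by [].
  - by move=> s i _ si; case: eqP => // Hs; move: si; rewrite Hs ffunE.
  - by move=> Q c _ HQ s; case: eqP => _ //; rewrite mulmx0 scaler0.
pose kk : 'I_n := Ordinal lekn.
have lekn' : (k <= n)%N by apply: ltnW.
pose up := 2^-1 *: (u + P kk *m u); pose um := 2^-1 *: (u - P kk *m u).
have [g1 [Hs1 He1 Hz1 HQ1]] := IH lekn' up.
have [g2 [Hs2 He2 Hz2 HQ2]] := IH lekn' um.
have commk : forall i, P kk *m P i = P i *m P kk by [].
have Pup : P kk *m up = 1 *: up.
  by rewrite scale1r /up -scalemxAr mulmxDr mulmxA HP2 mul1mx addrC.
have Pum : P kk *m um = (-1) *: um.
  by rewrite scaleN1r /um -scalemxAr mulmxBr mulmxA HP2 mul1mx -scalerN opprB.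
have g1P s : P kk *m g1 s = g1 s by rewrite (HQ1 _ 1 commk Pup) scale1r.
have g2P s : P kk *m g2 s = - g2 s by rewrite (HQ2 _ (-1) commk Pum) scaleN1r.
have kkne (i : 'I_n) : (i < k)%N -> i != kk.
  by move=> lt; apply/eqP => Ei; move: lt; rewrite Ei ltnn.
have kkne' (i : 'I_n) : (k < i)%N -> i != kk.
  by move=> lt; apply/eqP => Ei; move: lt; rewrite Ei ltnn.
exists (fun s : {ffun 'I_n -> bool} => if s kk then g2 (flip kk s) else g1 s); split.
- have E (s : {ffun 'I_n -> bool}) : (if s kk then g2 (flip kk s) else g1 s) = g2 (flip kk s) + g1 s.
    case: ifP => Hk.
      by rewrite (Hz1 s kk) ?addr0.
    by rewrite (Hz2 (flip kk s) kk) ?add0r // flip_k Hk.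
  rewrite (eq_bigr _ (fun s _ => E s)) big_split /= -Hs1.
  have -> : \sum_s g2 (flip kk s) = \sum_s g2 s.
    by rewrite (reindex_inj (can_inj (flipK kk))); apply: eq_bigr => s _; rewrite flipK.
  rewrite -Hs2 /up /um -scalerDr addrC addrACA subrr addr0 -mulr2n -scaler_nat scalerA.
  by rewrite mulVf ?scale1r // pnatr_eq0.
- move=> i s; rewrite ltnS leq_eqVlt => /orP[/eqP Hi | Hi].
    have -> : i = kk by apply: val_inj.
    case: ifP => Hk; first by rewrite g2P /sg scaleN1r.
    by rewrite g1P /sg scale1r.
  case: ifP => Hk; last exact: He1.
  by rewrite He2 // flip_eq // kkne.
- move=> s i lei si; case: ifP => Hk.
    by apply: (Hz2 _ i); [apply: ltnW | rewrite flip_eq // kkne'].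
  by apply: (Hz1 _ i) => //; apply: ltnW.
- move=> Q c HQ Qu s.
  have Q1 : Q *m up = c *: up by apply: comm_stepP.
  have Q2 : Q *m um = c *: um by apply: comm_stepM.
  by case: ifP => _; [apply: HQ2 | apply: HQ1].
Qed.


Lemma gram_dec n r (P : 'I_n -> 'M[R]_r) (u : 'cV[R]_r) (g : {ffun 'I_n -> bool} -> 'cV[R]_r) :
  (forall i, (P i)^T = P i) -> u = \sum_s g s ->
  (forall i s, P i *m g s = sg (s i) *: g s) ->
  [/\ forall t, dot u (g t) = dot (g t) (g t),
      \sum_t dot (g t) (g t) = dot u u &
      forall i j, dot (P i *m u) (P j *m u) = \sum_t dot (g t) (g t) * (sg (t i) * sg (t j))].
Proof.
move=> Hsym Hu Heig.
have orth s t : s != t -> dot (g s) (g t) = 0.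
  move=> Hst.
  have /existsP [i Hi] : [exists i, s i != t i].
    apply: contraR Hst => /existsPn H; apply/eqP/ffunP => i.
    by move: (H i) => /negPn/eqP.
  have E : sg (s i) * dot (g s) (g t) = sg (t i) * dot (g s) (g t).
    by rewrite -dotZl -Heig dotMl Hsym Heig dotZr.
  move: Hi E; rewrite /sg; case: (s i); case: (t i) => // _ E; lra.
have dotu t : dot u (g t) = dot (g t) (g t).
  rewrite Hu dot_suml (bigD1 t) //= big1 ?addr0 // => s Hs; exact: orth.
split=> //.
  by rewrite {2}Hu dot_sumr; apply: eq_bigr => t _; rewrite dotu.
move=> i j; rewrite dotMl Hsym mulmxA {2}Hu !mulmx_sumr dot_sumr.
apply: eq_bigr => t _; rewrite -mulmxA Heig -scalemxAr Heig !dotZr dotu.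
ring.
Qed.


Lemma cut_of N (X : 'M[R]_N) (lam : {ffun 'I_N -> bool} -> R) :
  (forall s, 0 <= lam s) -> \sum_s lam s = 1 ->
  (forall i j, X i j = \sum_s lam s * (sg (s i) * sg (s j))) -> cut_polytope X.
Proof.
move=> H0 H1 HX; exists lam; split=> //; split=> //.
apply/matrixP => i j; rewrite HX summxE; apply: eq_bigr => s _.
by rewrite !mxE big_ord1 !mxE.
Qed.

Lemma vcatE N r (v : 'I_N -> 'cV[R]_r) i a : vcat v (mxvec_index i a) 0 = v i a 0.
Proof. by rewrite /vcat mxE mxvecE mxE. Qed.

Lemma factor N r (M : 'M[R]_(N * r)) (i0 : 'I_N) :
  calB M -> \rank M = r ->
  forall x y, M x y = \sum_c M (mxvec_index i0 c) x * M (mxvec_index i0 c) y.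
Proof.
move=> [[Msym _] [Hd _]] Hr.
pose idx := @mxvec_index N r i0.
have Md a c : M (idx a) (idx c) = (a == c)%:R.
  by have := congr1 (fun A : 'M[R]_r => A a c) (Hd i0); rewrite !mxE.
pose U : 'M[R]_(r, N * r) := \matrix_(c, y) M (idx c) y.
have sUM : (U <= M)%MS.
  apply/row_subP => c; have -> : row c U = row (idx c) M by apply/rowP => y; rewrite !mxE.
  exact: row_sub.
pose S : 'M[R]_(N * r, r) := \matrix_(y, b) (y == idx b)%:R.
have US : U *m S = 1%:M.
  apply/matrixP => a b; rewrite !mxE (bigD1 (idx b)) //= big1 ?addr0.
    by rewrite !mxE eqxx mulr1 Md.
  by move=> y /negbTE Hy; rewrite !mxE Hy mulr0.
have rU : \rank U = r.
  apply/eqP; rewrite eqn_leq rank_leq_row /=.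
  by rewrite -{1}(mxrank1 R r) -US mxrankM_maxl.
have /andP[_ sMU] : (U == M)%MS by rewrite -(mxrank_leqif_eq sUM).2 rU Hr.
have [D HD] := submxP sMU.
have DE x c : D x c = M x (idx c).
  rewrite HD !mxE (bigD1 c) //= big1 ?addr0; first by rewrite !mxE Md eqxx mulr1.
  by move=> a /negbTE Ha; rewrite !mxE Md Ha mulr0.
move=> x y; rewrite {1}HD mxE; apply: eq_bigr => c _; rewrite DE !mxE.
by rewrite -{1}Msym mxE.
Qed.


Lemma structure N r (M : 'M[R]_(N * r)) (v : 'I_N -> 'cV[R]_r) (i0 : 'I_N) :
  calB M -> \rank M = r ->
  \sum_i dot (v i) (v i) = N%:R ->
  ((vcat v)^T *m M *m vcat v) 0 0 = (expn N 2)%:R ->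
  exists (P : 'I_N -> 'M[R]_r) (u : 'cV[R]_r),
    [/\ forall i, (P i)^T = P i, forall i, P i *m P i = 1%:M,
        forall i j, P i *m P j = P j *m P i, dot u u = 1 & forall j, v j = P j *m u].
Proof.
move=> HB Hr Hn Hq.
have Hf := factor i0 HB Hr.
move: HB => [[Msym _] [Hd Hbs]].
pose idx := @mxvec_index N r.
pose P j := blk M i0 j.
have HP i j : blk M i j = (P i)^T *m P j.
  by apply/matrixP => a b; rewrite !mxE Hf; apply: eq_bigr => c _; rewrite !mxE.
have Psym i : (P i)^T = P i by apply: Hbs.
have HPP i j : P i *m P j = blk M i j by rewrite HP Psym.
have P2 i : P i *m P i = 1%:M by rewrite HPP Hd.
have Pc i j : P i *m P j = P j *m P i.
  by rewrite HPP -Hbs HP trmx_mul trmxK Psym.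
pose w := \sum_j P j *m v j.
pose vc x := vcat v x 0.
have wE c : w c 0 = \sum_x M (idx i0 c) x * vc x.
  rewrite /w summxE sum_mxvec; apply: eq_bigr => j _; rewrite mxE.
  by apply: eq_bigr => a _; rewrite /vc vcatE mxE.
have L : ((vcat v)^T *m M *m vcat v) 0 0 = \sum_x \sum_y vc x * M x y * vc y.
  rewrite mxE; under eq_bigr do rewrite mxE mulr_suml.
  rewrite exchange_big; apply: eq_bigr => x _; apply: eq_bigr => y _; rewrite [(vcat v)^T _ _]mxE. done.
have Hq' : dot w w = (expn N 2)%:R.
  rewrite -Hq L dotE.
  under eq_bigr do rewrite wE mulr_suml; under eq_bigr do under eq_bigr do rewrite mulr_sumr.
  rewrite exchange_big; apply: eq_bigr => x _.
  rewrite exchange_big; apply: eq_bigr => y _.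
  rewrite Hf mulr_sumr mulr_suml; apply: eq_bigr => c _ /=.
  ring.
have N0 : (0 < N)%N by apply: leq_ltn_trans (ltn_ord i0).
have Nne0 : N%:R != 0 :> R by rewrite pnatr_eq0 -lt0n.
pose u := N%:R^-1 *: w.
have E j : dot (P j *m v j - u) (P j *m v j - u)
    = dot (v j) (v j) - 2 * dot (P j *m v j) u + dot u u.
  rewrite dotDl !dotDr !dotNl !dotNr (dotC u (P j *m v j)).
  rewrite dotMl Psym mulmxA P2 mul1mx; ring.
have Hz : \sum_j dot (P j *m v j - u) (P j *m v j - u) = 0.
  rewrite (eq_bigr _ (fun j _ => E j)) !big_split /= sumrN -mulr_sumr -dot_suml -/w.
  rewrite sumr_const card_ord Hn /u !dotZr !dotZl Hq' natrX -[_ *+ N]mulr_natr.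
  by field.
have Hj j : P j *m v j = u.
  apply/eqP; rewrite -subr_eq0; apply/eqP/dot_eq0.
  move/psumr_eq0P: Hz => H.
  by apply: (H (fun i _ => dot_ge0 _)).
have vj j : v j = P j *m u by rewrite -(Hj j) mulmxA P2 mul1mx.
have uu : dot u u = 1.
  have : \sum_j dot (v j) (v j) = N%:R * dot u u.
    under eq_bigr do rewrite vj dotMl Psym mulmxA P2 mul1mx.
    by rewrite sumr_const card_ord mulr_natl.
  rewrite Hn => /eqP; rewrite -{1}(mulr1 N%:R) (inj_eq (mulfI Nne0)) => /eqP <-.
  by [].
by exists P, u; split.
Qed.


Lemma dot_e N (i : 'I_N) (x : 'cV[R]_N) : dot (ebasis R i) x = x i 0.
Proof.
rewrite dotE (bigD1 i) //= big1 ?addr0 => [|k Hk]; rewrite /ebasis mxE.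
  by rewrite !eqxx mul1r.
by rewrite (negbTE Hk) mul0r.
Qed.

Lemma sg2 b : sg b * sg b = 1.
Proof. by case: b; rewrite /sg ?mulrNN mulr1. Qed.

Lemma sg_sum_off N (i j : 'I_N) : i != j -> \sum_(s : {ffun 'I_N -> bool}) sg (s i) * sg (s j) = 0.
Proof.
move=> Hij; set S := \sum_s _.
have : S = - S.
  rewrite {1}/S (reindex_inj (can_inj (flipK i))) -sumrN; apply: eq_bigr => s _.
  rewrite flip_k flip_eq 1?eq_sym //.
  by case: (s i); case: (s j); rewrite /sg /=; ring.
move=> H; lra.
Qed.

End P9.

Theorem proposition9 (R : rcfType) :
  (forall (N r : nat) (v : 'I_N -> 'cV[R]_r),
      \sum_(i < N) ((v i)^T *m v i) 0 0 = N%:R ->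
      (exists M : 'M[R]_(N * r),
          calB M /\ \rank M = r /\
          ((vcat v)^T *m M *m vcat v) 0 0 = (expn N 2)%:R) ->
      cut_polytope (gram v))
  /\
  (forall N : nat, N <> 1%N -> N <> 2%N -> ~~ (4 %| N)%N ->
      cut_polytope (1%:M : 'M[R]_N) /\
      (1%:M : 'M[R]_N) = gram (@ebasis R N) /\
      ~ (exists M : 'M[R]_(N * N),
            calB M /\
            ((vcat (@ebasis R N))^T *m M *m vcat (@ebasis R N)) 0 0 = (expn N 2)%:R /\
            \rank M = N)).
Proof.
split.
  move=> N r v Hn [M [HB [Hr Hq]]].
  case: N v M Hn HB Hr Hq => [|N] v M Hn HB Hr Hq.
    apply: (@cut_of R 0 _ (fun _ => 1)).
    - by move=> _; exact: ler01.
    - by rewrite sumr_const card_ffun card_bool card_ord expn0.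
    - by move=> i; case: i.
  have [P [u [Psym P2 Pc uu vj]]] := structure ord0 HB Hr Hn Hq.
  have [g [Hs He _ _]] := eigdec_k P2 Pc (leqnn N.+1) u.
  have {}He i s : P i *m g s = sg R (s i) *: g s by apply: He.
  have [_ Hsum Hg] := gram_dec Psym Hs He.
  apply: (@cut_of R _ _ (fun t => dot (g t) (g t))).
  - by move=> t; apply: dot_ge0.
  - by rewrite Hsum uu.
  - move=> i j; transitivity (dot (v i) (v j)); first by rewrite mxE.
    by rewrite !vj Hg.
move=> N N1 N2 N4.
have Igram : (1%:M : 'M[R]_N) = gram (@ebasis R N).
  apply/matrixP => i j; transitivity (dot (ebasis R j) (ebasis R i)); last by rewrite dotC mxE.
  by rewrite dot_e !mxE andbT eq_sym.
split.
  apply: (@cut_of R _ _ (fun _ => (2 ^ N)%:R^-1)).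
  - by move=> _; rewrite invr_ge0 ler0n.
  - rewrite sumr_const card_ffun card_bool card_ord -[_ *+ _]mulr_natr mulVf //.
    by rewrite pnatr_eq0 expn_eq0.
  - move=> i j; rewrite -mulr_sumr mxE; case: (eqVneq i j) => [<-|Hij].
      under eq_bigr do rewrite sg2.
      rewrite sumr_const card_ffun card_bool card_ord /= -[_ *+ _]mulr_natr mulVf //.
        by rewrite mulr1.
      by rewrite pnatr_eq0 expn_eq0.
    by rewrite sg_sum_off // mulr0.
split=> //.
move=> [M [HB [Hq Hr]]].
case: N N1 N2 N4 Igram M HB Hq Hr => [|[|[|N']]] // _ _ N4 Igram M HB Hq Hr.
set N := N'.+3 in N4 Igram M HB Hq Hr *.
have Hn : \sum_(i < N) dot (ebasis R i) (ebasis R i) = N%:R :> R.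
  under eq_bigr do rewrite dot_e mxE !eqxx.
  by rewrite sumr_const card_ord.
have [P [u [Psym P2 Pc uu vj]]] := structure ord0 HB Hr Hn Hq.
have [g [Hs He _ _]] := eigdec_k P2 Pc (leqnn N) u.
have {}He i s : P i *m g s = sg R (s i) *: g s by apply: He.
have [dotu Hsum Hg] := gram_dec Psym Hs He.
have XI i j : (i == j)%:R = \sum_t dot (g t) (g t) * (sg R (t i) * sg R (t j)).
  by rewrite -Hg -!vj dot_e /ebasis mxE andbT eq_sym.
have gE t j : g t j 0 = sg R (t j) * dot (g t) (g t).
  by rewrite -dot_e vj dotMl Psym He dotZr dotu.
have lamq t : dot (g t) (g t) = N%:R * dot (g t) (g t) ^+ 2.
  rewrite {1}dotE; under eq_bigr do rewrite !gE.
  rewrite (eq_bigr (fun _ => dot (g t) (g t) ^+ 2)) ?sumr_const ?card_ord ?mulr_natl //.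
  by move=> j _; rewrite mulrACA sg2 mul1r expr2.
pose i0 : 'I_N := ord0.
pose i1 : 'I_N := @Ordinal N 1 isT.
pose i2 : 'I_N := @Ordinal N 2 isT.
pose c t := (1 + sg R (t i0) * sg R (t i1)) * (1 + sg R (t i0) * sg R (t i2)).
have Et t : dot (g t) (g t) * c t = dot (g t) (g t)
   + dot (g t) (g t) * (sg R (t i0) * sg R (t i1))
   + dot (g t) (g t) * (sg R (t i0) * sg R (t i2))
   + dot (g t) (g t) * (sg R (t i1) * sg R (t i2)).
  by rewrite /c /sg; case: (t i0); case: (t i1); case: (t i2); ring.
have C : \sum_t dot (g t) (g t) * c t = 1.
  rewrite (eq_bigr _ (fun t _ => Et t)) !big_split /= -!XI Hsum uu.
  by rewrite /i0 /i1 /i2 /=; ring.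
pose b t := ((N%:R * dot (g t) (g t) == 1) && (t i0 == t i1) && (t i0 == t i2)).
have Tb t : N%:R * (dot (g t) (g t) * c t) = (4 * b t)%:R.
  have : dot (g t) (g t) * (1 - N%:R * dot (g t) (g t)) = 0.
    by rewrite mulrBr mulr1 mulrCA -expr2 -lamq subrr.
  rewrite /b; move/eqP; rewrite mulf_eq0 subr_eq0 => /orP[/eqP H0 | /eqP H].
    by rewrite H0 !mul0r !mulr0 eq_sym oner_eq0.
  rewrite mulrA -H mul1r eqxx /c /sg.
  by case: (t i0); case: (t i1); case: (t i2) => /=; ring.
have : N%:R = (\sum_t (4 * b t))%:R :> R.
  by rewrite natr_sum -(eq_bigr _ (fun t _ => Tb t)) -mulr_sumr C mulr1.
move/eqP; rewrite eqr_nat -big_distrr /= => /eqP HN.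
by move: N4; rewrite HN dvdn_mulr.
Qed.
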